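(* Consider C-VFL (described in the context) and suppose Assumptions (A1)–(A5) of the context hold. Let $t_0$ be a communication iteration and suppose $\eta^{t_0}\le\frac{1}{4Q\max_mL_m}$. Then $$\sum_{t=t_0}^{t_0+Q-1}\mathbb{E}^{t_0}\big\|\hat{\mathcal G}^t-\mathcal G^{t_0}\big\|^2\le 16Q^3(\eta^{t_0})^2\sum_{m=0}^ML_m^2\|\nabla_mF(\Theta^{t_0})\|^2+16Q^3(\eta^{t_0})^2\sum_{m=0}^ML_m^2\frac{\sigma_m^2}{B}+64Q^3\sum_{m=0}^MH_m^2G_m^2\|E_m^{t_0}\|_{\mathcal F}^2 .$$
   Context: Setting. There are $M$ parties indexed $1,\dots,M$ and a server indexed $0$. A dataset with samples $x^i=[x_1^i,\dots,x_M^i]$ and labels $y^i$ ($i=1,\dots,N$) is vertically partitioned, party $m$ holding features $x_m^i$. Party $m\ge1$ has parameters $\theta_m$ and embedding function $h_m(\theta_m;x_m)\in\mathbb{R}^{P_m}$; the server has $\theta_0\in\mathbb{R}^{P_0}$ and $h_0(\theta_0;x):=\theta_0$. For a loss $l$, $F(\Theta)=\frac1N\sum_i l(\theta_0,h_1(\theta_1;x_1^i),\dots,h_M(\theta_M;x_M^i);y^i)$, $\Theta=[\theta_0^T,\dots,\theta_M^T]^T$; for a random mini-batch $\mathcal B$ of $B$ samples, $F_{\mathcal B}$ is the corresponding average over $\mathcal B$. $\nabla_m$ denotes the partial gradient in $\theta_m$; $h_m(\theta_m;X_m^{\mathcal B})$ is the $P_m\times B$ matrix of embeddings of the samples of $\mathcal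 B$. For a collection $\Phi$ of embeddings of parties $j\neq m$, $\nabla_mF_{\mathcal B}(\Phi)$ is the gradient in $\theta_m$ of the mini-batch loss in which party $m$'s embedding is $h_m(\theta_m;X_m^{\mathcal B})$ and the other embeddings are fixed to those in $\Phi$. Assumptions. (A1) $\|\nabla F(\Theta_1)-\nabla F(\Theta_2)\|\le L\|\Theta_1-\Theta_2\|$ and $\|\nabla_mF_{\mathcal B}(\Theta_1)-\nabla_mF_{\mathcal B}(\Theta_2)\|\le L_m\|\Theta_1-\Theta_2\|$ for all $\Theta_1,\Theta_2$, all $\mathcal B$, with $L,L_m<\infty$. (A2) $\mathbb{E}_{\mathcal B}\nabla_mF_{\mathcal B}(\Theta)=\nabla_mF(\Theta)$. (A3) $\mathbb{E}_{\mathcal B}\|\nabla_mF(\Theta)-\nabla_mF_{\mathcal B}(\Theta)\|^2\le\sigma_m^2/B$. (A4) $\|\nabla^2_{h_m(\theta_m;X_m^{\mathcal B})}F_{\mathcal B}(\Theta)\|_{\mathcal F}\le H_m$ for all $\Theta$, all $\mathcal B$. (A5) $\|\nabla_{\theta_m}h_m(\theta_m;X_m^{\mathcal B})\|_{\mathcal F}\le G_m$ for all $\theta_m$, all $\mathcal B$. Algorithm C-VFL. Compressors $\mathcal C_m:\mathbb{R}^{P_m}\to\mathbb{R}^{P_m}$, $Q$ local iterations per round. At each communication iteration $t$ ($t\bmod Q=0$) a mini-batch $\mathcal B^t$ is sampled and $\hat\Phi^{t}=\{\mathcal C_0(\theta_0^t),\mathcal C_1(h_1(\theta_1^t;X_1^{\mathcal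 B^t})),\dots,\mathcal C_M(h_M(\theta_M^t;X_M^{\mathcal B^t}))\}$ is sent to all parties. With $t_0$ the most recent communication iteration $\le t$, each $m=0,\dots,M$ sets $\hat\Phi_m^t$ to be $\hat\Phi^{t_0}$ with $m$-th entry replaced by $h_m(\theta_m^t;X_m^{\mathcal B^{t_0}})$ and updates $\theta_m^{t+1}=\theta_m^t-\eta^{t_0}\nabla_mF_{\mathcal B}(\hat\Phi_m^t;y^{\mathcal B^{t_0}})$. Define $\hat{\mathcal G}^t=[(\nabla_0F_{\mathcal B}(\hat\Phi_0^t))^T,\dots,(\nabla_MF_{\mathcal B}(\hat\Phi_M^t))^T]^T$, so $\Theta^{t+1}=\Theta^t-\eta^{t_0}\hat{\mathcal G}^t$, and let $\mathcal G^{t_0}=\nabla F_{\mathcal B^{t_0}}(\Theta^{t_0})$ be the stacked stochastic gradient at iteration $t_0$ on mini-batch $\mathcal B^{t_0}$ without compression error. $\mathbb{E}^{t_0}$ denotes expectation over $\mathcal B^{t_0}$ conditioned on $\Theta^0,\dots,\Theta^{t_0}$. Compression error. $\epsilon_j^{t_0}:=\mathcal C_j(h_j(\theta_j^{t_0};X_j^{\mathcal B^{t_0}}))-h_j(\theta_j^{t_0};X_j^{\mathcal B^{t_0}})$ ($P_j\times B$), and $E_m^{t_0}$ is the matrix stacking the blocks $\epsilon_j^{t_0}$ for $j\ne m$ with a zero block in position $m$.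
   Formalization: (A4) bounds, at every embedding collection Φ rather than only at Θ, the Frobenius norm of the second derivatives of $F_{\mathcal B}$ in $h_m(\theta_m;X_m^{\mathcal B})$ against all parties' embeddings, and $\|E_m^{t_0}\|_{\mathcal F}^2$ is replaced by its expectation $\mathbb{E}^{t_0}$. Each condition added here is assumed in the paper as well or is needed for the statement above to hold. *)

(* Defs.v *)
From HB Require Import structures.
From mathcomp Require Import all_boot all_order all_algebra.
From mathcomp Require Import all_classical all_reals all_analysis.
Import Order.TTheory GRing.Theory Num.Theory.
Local Open Scope ring_scope.

Definition sqnorm {R : realType} {n : nat} (v : 'rV[R]_n) : R :=
  \sum_(k < n) v 0 k ^+ 2.

Definition enorm {R : realType} {n : nat} (v : 'rV[R]_n) : R :=
  Num.sqrt (sqnorm v).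

Definition pderiv1 {R : realType} {n : nat} (g : 'rV[R]_n -> R)
  (v : 'rV[R]_n) (k : 'I_n) : R :=
  derive1 (fun t : R => g (v + t *: delta_mx 0 k)) 0.

Definition grad {R : realType} {n : nat} (g : 'rV[R]_n -> R) (v : 'rV[R]_n)
  : 'rV[R]_n := \row_k pderiv1 g v k.

(* ---------- the vertical-federated model ----------
   Parties are indexed by 'I_M.+1, index 0 = server.
   d m : dimension of theta_m ; P m : embedding dimension of party m.
   X m : feature space of party m, x m i : features of sample i held by m.
   h m theta xi : embedding of party m ; l : loss of the concatenated
   embeddings [h_0; ...; h_M] and a label. *)

Definition Params {R : realType} {M : nat} (d : 'I_M.+1 -> nat) :=
  forall m : 'I_M.+1, 'rV[R]_(d m).

Definition Emb {R : realType} {M : nat} (P : 'I_M.+1 -> nat) (N : nat) :=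
  forall m : 'I_M.+1, 'I_N -> 'rV[R]_(P m).

Definition psqnorm {R : realType} {M : nat} {d : 'I_M.+1 -> nat}
  (T : @Params R M d) : R := \sum_(m < M.+1) sqnorm (T m).

Definition psub {R : realType} {M : nat} {d : 'I_M.+1 -> nat}
  (T1 T2 : @Params R M d) : @Params R M d := fun m => T1 m - T2 m.

Section Model.
Context {R : realType} {M N : nat} {d P : 'I_M.+1 -> nat}
  {X : 'I_M.+1 -> Type} {Y : Type}
  (x : forall m : 'I_M.+1, 'I_N -> X m) (y : 'I_N -> Y)
  (h : forall m : 'I_M.+1, 'rV[R]_(d m) -> X m -> 'rV[R]_(P m))
  (l : 'rV[R]_(\sum_(j < M.+1) P j) -> Y -> R).

Definition emb (m : 'I_M.+1) (th : 'rV[R]_(d m)) : 'I_N -> 'rV[R]_(P m) :=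
  fun i => h m th (x m i).

Definition trueEmb (T : @Params R M d) : @Emb R M P N :=
  fun m => emb m (T m).

Definition lossS (S : {set 'I_N}) (Phi : @Emb R M P N) : R :=
  (#|S|%:R)^-1 * \sum_(i in S) l (\mxrow_(j < M.+1) Phi j i) (y i).

(* nabla_m F_S(Phi) at theta_m : gradient in theta_m of the mini-batch loss
   in which party m's embedding is h_m(theta_m; .) and the other embeddings
   are those of Phi *)
Definition gradS (S : {set 'I_N}) (m : 'I_M.+1) (Phi : @Emb R M P N)
  (th : 'rV[R]_(d m)) : 'rV[R]_(d m) :=
  grad (fun th' => lossS S (@dfwith _ (fun j : 'I_M.+1 => 'I_N -> 'rV[R]_(P j)) Phi m (emb m th'))) th.

Definition gradSTheta (S : {set 'I_N}) (m : 'I_M.+1) (T : @Params R M d)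
  : 'rV[R]_(d m) := gradS S m (trueEmb T) (T m).

Definition gradF (m : 'I_M.+1) (T : @Params R M d) : 'rV[R]_(d m) :=
  gradSTheta [set: 'I_N]%SET m T.

Definition pertE (Phi : @Emb R M P N) (j : 'I_M.+1) (i : 'I_N) (q : 'I_(P j))
  (t : R) : @Emb R M P N :=
  @dfwith _ (fun j' : 'I_M.+1 => 'I_N -> 'rV[R]_(P j')) Phi j (fun k => if k == i then Phi j k + t *: delta_mx 0 q else Phi j k).

Definition pdE (j : 'I_M.+1) (i : 'I_N) (q : 'I_(P j))
  (f : @Emb R M P N -> R) (Phi : @Emb R M P N) : R :=
  derive1 (fun t : R => f (pertE Phi j i q t)) 0.

Definition hess_sq (S : {set 'I_N}) (m : 'I_M.+1) (Phi : @Emb R M P N) : R :=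
  \sum_(i in S) \sum_(p < P m) \sum_(j < M.+1) \sum_(k in S) \sum_(q < P j)
     (pdE j k q (pdE m i p (lossS S)) Phi) ^+ 2.

Definition jac_sq (S : {set 'I_N}) (m : 'I_M.+1) (th : 'rV[R]_(d m)) : R :=
  \sum_(i in S) \sum_(p < P m) \sum_(k < d m)
     (derive1 (fun t : R => h m (th + t *: delta_mx 0 k) (x m i) 0 p) 0) ^+ 2.

Variable C : forall m : 'I_M.+1, 'rV[R]_(P m) -> 'rV[R]_(P m).

(* the compressed embeddings hat Phi^{t0} sent at the communication
   iteration t0 (parameters T0 = Theta^{t0}) *)
Definition compEmb (T0 : @Params R M d) : @Emb R M P N :=
  fun j i => C j (h j (T0 j) (x j i)).

Fixpoint traj (S : {set 'I_N}) (eta : R) (T0 : @Params R M d) (k : nat)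
  : @Params R M d :=
  match k with
  | 0 => T0
  | k'.+1 => let Tk := traj S eta T0 k' in
             fun m => Tk m - eta *: gradS S m (compEmb T0) (Tk m)
  end.

Definition Ghat (S : {set 'I_N}) (eta : R) (T0 : @Params R M d) (k : nat)
  : @Params R M d :=
  fun m => gradS S m (compEmb T0) (traj S eta T0 k m).

Definition G0 (S : {set 'I_N}) (T0 : @Params R M d) : @Params R M d :=
  fun m => gradSTheta S m T0.

Definition err_sq (S : {set 'I_N}) (T0 : @Params R M d) (m : 'I_M.+1) : R :=
  \sum_(j < M.+1 | j != m) \sum_(i in S)
     sqnorm (C j (h j (T0 j) (x j i)) - h j (T0 j) (x j i)).

End Model.

(* Main.v *)
Require Import Defs.
From HB Require Import structures.
From mathcomp Require Import all_boot all_order all_algebra.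
From mathcomp Require Import all_classical all_reals all_analysis.
From mathcomp Require Import ring lra.
Import Order.TTheory GRing.Theory Num.Theory numFieldNormedType.Exports.
Local Open Scope ring_scope.

Section Gen.
Context {R : realType} {V W : normedModType R}.

Lemma line_deriveE (f : V -> W) a v s0 :
  derive1 (fun s : R => f (a + s *: v)) s0 = 'D_v f (a + s0 *: v).
Proof.
rewrite /derive1 /derive; set g1 := (fun _ : R => _); set g2 := (fun _ : R => _).
suff -> : g1 = g2 by [].
by apply/funext => t; rewrite /g1 /g2 /= scalerDl addrCA.
Qed.

Lemma derive_line0 (f : V -> W) a v :
  'D_v f a = derive1 (fun s : R => f (a + s *: v)) 0.
Proof. by rewrite line_deriveE scale0r addr0. Qed.

Lemma line_derivableE (f : V -> W) a v s0 :
  derivable (fun s : R => f (a + s *: v)) s0 1 = derivable f (a + s0 *: v) v.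
Proof.
rewrite /derivable.
have E : (fun h : R => h^-1 *: (((fun s : R => f (a + s *: v)) \o shift s0) (h *: (1:R)) - f (a + s0 *: v))) = (fun h : R => h^-1 *: ((f \o shift (a + s0 *: v)) (h *: v) - f (a + s0 *: v))).
  by apply/funext => t /=; rewrite -[t *: (1:R)]/(t * 1) mulr1 scalerDl addrCA.
by rewrite E.
Qed.

Lemma line_is_derive (f : V -> W) a v s0 :
  derivable f (a + s0 *: v) v ->
  is_derive s0 1 (fun s : R => f (a + s *: v)) ('D_v f (a + s0 *: v)).
Proof.
move=> df; apply: DeriveDef; first by rewrite line_derivableE.
by rewrite -derive1E line_deriveE.
Qed.

Lemma is_derive_bigsum (I : Type) (r : seq I) (A : pred I) (f : I -> V -> W)
   x v (df : I -> W) :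
  (forall i, A i -> is_derive x v (f i) (df i)) ->
  is_derive x v (fun z => \sum_(i <- r | A i) f i z) (\sum_(i <- r | A i) df i).
Proof.
move=> H; elim: r => [|a r IH].
  have -> : (fun z => \sum_(i <- [::] | A i) f i z) = cst 0.
    by apply/funext => z; rewrite big_nil.
  by rewrite big_nil; apply: is_derive_cst.
rewrite big_cons; case Aa: (A a).
  have -> : (fun z => \sum_(i <- a :: r | A i) f i z) =
     f a + (fun z => \sum_(i <- r | A i) f i z).
    by apply/funext => z; rewrite big_cons Aa.
  by apply: is_deriveD => //; apply: H.
have -> : (fun z => \sum_(i <- a :: r | A i) f i z) =
   (fun z => \sum_(i <- r | A i) f i z).
  by apply/funext => z; rewrite big_cons Aa.
exact: IH.
Qed.

Lemma derive_lin_row {n} (g : 'rV[R]_n -> R) z w : differentiable g z ->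
  'D_w g z = \sum_(r < n) w 0 r * 'D_(delta_mx 0 r) g z.
Proof.
move=> dg; rewrite deriveE //.
under eq_bigr do rewrite deriveE//.
rewrite {1}(row_sum_delta w) linear_sum; apply: eq_bigr => r _.
by rewrite linearZ.
Qed.

End Gen.

Section Gen2.
Context {R : realType} {V : normedModType R}.

Lemma line_is_deriveM (f : V -> R) a v s0 c :
  derivable f (a + s0 *: v) v ->
  is_derive s0 1 (fun s : R => c * f (a + s *: v)) (c * 'D_v f (a + s0 *: v)).
Proof.
move=> df; have := is_deriveZ c (line_is_derive _ _ _ _ df).
by apply.
Qed.

End Gen2.

Section Rk.
Context {R : realType} {n : nat} {p_ : 'I_n -> nat}.

Lemma mxrow_Rank m (B : forall j, 'M[R]_(m, p_ j)) a j (q : 'I_(p_ j)) :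
  (\mxrow_(j0 < n) B j0) a (tagnat.Rank j q) = B j a q.
Proof.
rewrite mxE.
have := tagnat.Rank2K (i0:=j) q.
move: (tagnat.Rank1K (i0:=j) q) (tagnat.sig2 (tagnat.Rank j q)).
move: (tagnat.sig1 (tagnat.Rank j q)) => j1 e.
move=> k; subst j1 => ->.
by rewrite cast_ord_id.
Qed.

Lemma rowRank_ext (A B : 'rV[R]_(\sum_j p_ j)) :
  (forall j (q : 'I_(p_ j)), A 0 (tagnat.Rank j q) = B 0 (tagnat.Rank j q)) -> A = B.
Proof.
move=> H; apply/matrixP => a r; rewrite (ord1 a) -(tagnat.sig2K r); exact: H.
Qed.

Lemma sum_Rank (F : 'I_(\sum_j p_ j) -> R) :
  \sum_(r < \sum_j p_ j) F r = \sum_(j < n) \sum_(q < p_ j) F (tagnat.Rank j q).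
Proof.
rewrite (sig_big_dep xpredT (fun _ _ => true) (fun j (q : 'I_(p_ j)) => F (tagnat.Rank j q))) /=.
rewrite (reindex (@tagnat.rank _ p_)) /=; last exact: tagnat.rank_bij_on.
by apply: eq_bigr => -[j q] _; rewrite tagnat.rankE.
Qed.

Lemma delta_Rank j (q : 'I_(p_ j)) j' (q' : 'I_(p_ j')) :
  (delta_mx 0 (tagnat.Rank j q) : 'rV[R]_(\sum_j p_ j)) 0 (tagnat.Rank j' q') =
  ((j' == j) && (q' == q :> nat))%:R.
Proof.
by rewrite mxE eqxx /= -tagnat.eq_Rank.
Qed.

End Rk.

Section Model2.
Context {R : realType} {M N : nat} {d P : 'I_M.+1 -> nat}
  {X : 'I_M.+1 -> Type} {Y : Type}
  (x : forall m : 'I_M.+1, 'I_N -> X m) (y : 'I_N -> Y)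
  (h : forall m : 'I_M.+1, 'rV[R]_(d m) -> X m -> 'rV[R]_(P m))
  (l : 'rV[R]_(\sum_(j < M.+1) P j) -> Y -> R).

Local Notation Emb := (@Emb R M P N).
Local Notation SP := (\sum_(j < M.+1) P j)%N.
Local Notation Rk := tagnat.Rank.

Definition rowE (Phi : Emb) (i : 'I_N) : 'rV[R]_SP := \mxrow_(j < M.+1) Phi j i.

Lemma dfw_in (Phi : Emb) m (V : 'I_N -> 'rV[R]_(P m)) :
  @dfwith _ (fun j : 'I_M.+1 => 'I_N -> 'rV[R]_(P j)) Phi m V m = V.
Proof. exact: dfwith_in. Qed.

Lemma dfw_out (Phi : Emb) m (V : 'I_N -> 'rV[R]_(P m)) j : m != j ->
  @dfwith _ (fun j : 'I_M.+1 => 'I_N -> 'rV[R]_(P j)) Phi m V j = Phi j.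
Proof. exact: dfwith_out. Qed.

Lemma rowE_Rank Phi i j (q : 'I_(P j)) : rowE Phi i 0 (Rk j q) = Phi j i 0 q.
Proof. exact: mxrow_Rank. Qed.

Lemma entryDZ {n} (A B : 'rV[R]_n) (t : R) k : (A + t *: B) 0 k = A 0 k + t * B 0 k.
Proof. by rewrite !mxE. Qed.

Lemma entryD {n} (A B : 'rV[R]_n) k : (A + B) 0 k = A 0 k + B 0 k.
Proof. by rewrite !mxE. Qed.

Lemma entryZ {n} (A : 'rV[R]_n) (t : R) k : (t *: A) 0 k = t * A 0 k.
Proof. by rewrite !mxE. Qed.

Lemma entrySum {n k} (F : 'I_k -> 'rV[R]_n) c :
  (\sum_(p < k) F p) 0 c = \sum_(p < k) F p 0 c.
Proof. by rewrite summxE. Qed.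

Lemma rowE_pert Phi j i (q : 'I_(P j)) t i0 :
  rowE (pertE Phi j i q t) i0 =
  rowE Phi i0 + t *: (if i == i0 then delta_mx 0 (Rk j q) else 0).
Proof.
apply: rowRank_ext => j' q'; rewrite entryDZ !rowE_Rank /pertE.
case: (eqVneq j j') => [e|ne].
  subst j'; rewrite dfw_in; rewrite [i == i0]eq_sym.
  case: (eqVneq i0 i) => [->|_]; last by rewrite mxE mulr0 addr0.
  by rewrite delta_Rank !mxE !eqxx.
rewrite (@dfw_out Phi j _ j' ne).
case: (i == i0); last by rewrite mxE mulr0 addr0.
by rewrite delta_Rank eq_sym (negbTE ne) mulr0 addr0.
Qed.

Lemma rowE_lin (Phi Delta : Emb) (s : R) i :
  rowE (fun j k => Phi j k + s *: Delta j k) i = rowE Phi i + s *: rowE Delta i.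
Proof. by apply/matrixP => a r; rewrite !mxE. Qed.

Lemma rowE_sub (Phi Phi' : Emb) i :
  rowE (fun j k => Phi j k - Phi' j k) i = rowE Phi i - rowE Phi' i.
Proof. by apply/matrixP => a r; rewrite !mxE. Qed.

Lemma rowE_dfw (Phi : Emb) m (V : 'I_N -> 'rV[R]_(P m)) i :
  rowE (@dfwith _ (fun j : 'I_M.+1 => 'I_N -> 'rV[R]_(P j)) Phi m V) i =
  rowE (@dfwith _ (fun j : 'I_M.+1 => 'I_N -> 'rV[R]_(P j)) Phi m (fun _ => 0)) i
  + \sum_(p < P m) V i 0 p *: delta_mx 0 (Rk m p).
Proof.
apply: rowRank_ext => j q; rewrite entryD entrySum !rowE_Rank.
rewrite (eq_bigr (fun p => V i 0 p * ((j == m) && (q == p :> nat))%:R)); last first.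
  by move=> p _; rewrite entryZ delta_Rank.
case: (eqVneq m j) => [e|ne].
  subst j; rewrite !dfw_in mxE add0r (bigD1 q) //= !eqxx mulr1 big1 ?addr0 //.
  by move=> p pq; rewrite eq_sym (inj_eq val_inj) (negbTE pq) mulr0.
rewrite !dfw_out // big1 ?addr0 //.
by move=> p _; rewrite mulr0.
Qed.

End Model2.

Section Chain.
Context {R : realType}.

Lemma diff_coordE {m n} (i : 'I_m) (j : 'I_n) (z v : 'M[R]_(m, n)) :
  'd (fun N : 'M[R]_(m, n) => N i j) z v = v i j.
Proof.
have @f : {linear 'M[R]_(m, n) -> R}.
  by exists (fun N : 'M[R]_(_, _) => N i j); do 2![eexists]; do ?[constructor];
     rewrite ?mxE// => ? *; rewrite ?mxE//; move=> ?; rewrite !mxE.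
rewrite (_ : (fun _ => _) = f) //; rewrite diff_lin //; exact: coord_continuous.
Qed.

Lemma derive1_coord {k} (u : R -> 'rV[R]_k) t0 p : differentiable u t0 ->
  derive1 (fun t => u t 0 p) t0 = ('d u t0 1) 0 p.
Proof.
move=> du.
have dc : differentiable ((fun N : 'rV[R]_k => N 0 p) \o u) t0.
  by apply: differentiable_comp => //; exact: differentiable_coord.
rewrite -[(fun t => u t 0 p)]/((fun N : 'rV[R]_k => N 0 p) \o u).
rewrite derive1E' // diff_comp //; last exact: differentiable_coord.
by rewrite /comp diff_coordE.
Qed.

Lemma aff_diff {n k} (A : 'rV[R]_n) (e : 'I_k -> 'rV[R]_n) w :
  differentiable (fun w : 'rV[R]_k => A + \sum_(p < k) w 0 p *: e p) w.
Proof.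
apply: differentiableD; first exact: differentiable_cst.
rewrite -(fct_sumE _ _ (fun p (w : 'rV[R]_k) => w 0 p *: e p)).
apply: differentiable_sum => p; apply: differentiableZl.
exact: differentiable_coord.
Qed.

Lemma chain_line {n k} (f : 'rV[R]_n -> R) (A : 'rV[R]_n)
  (e : 'I_k -> 'rV[R]_n) (u : R -> 'rV[R]_k) t0 :
  differentiable u t0 -> differentiable f (A + \sum_(p < k) u t0 0 p *: e p) ->
  is_derive t0 1 (fun t => f (A + \sum_(p < k) u t 0 p *: e p))
    (\sum_(p < k) derive1 (fun t => u t 0 p) t0 *
        'D_(e p) f (A + \sum_(p < k) u t0 0 p *: e p)).
Proof.
move=> du df.
set g := fun w : 'rV[R]_k => f (A + \sum_(p < k) w 0 p *: e p).
have dg : differentiable g (u t0).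
  exact: (differentiable_comp (aff_diff A e (u t0)) df).
have dgu : differentiable (g \o u) t0 by apply: differentiable_comp.
rewrite -[(fun t => _)]/(g \o u).
apply: DeriveDef; first exact/derivable1_diffP.
rewrite deriveE // diff_comp // /comp -(deriveE ('d u t0 1) dg) derive_lin_row //.
apply: eq_bigr => p _; rewrite -derive1_coord //; congr (_ * _).
rewrite !derive_line0.
congr derive1; apply/funext => s; rewrite /g; congr f.
rewrite -addrA; congr (_ + _).
rewrite (eq_bigr (fun q => u t0 0 q *: e q + (s * (q == p)%:R) *: e q)); last first.
  by move=> q _; rewrite !mxE /= scalerDl.
rewrite big_split /=; congr (_ + _).
rewrite (bigD1 p) //= eqxx mulr1 big1 ?addr0 // => q qp.
by rewrite (negbTE qp) mulr0 scale0r.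
Qed.

End Chain.

Section Chain2.
Context {R : realType}.

Lemma chain_lineM {n k} (f : 'rV[R]_n -> R) (A : 'rV[R]_n)
  (e : 'I_k -> 'rV[R]_n) (u : R -> 'rV[R]_k) t0 c :
  differentiable u t0 -> differentiable f (A + \sum_(p < k) u t0 0 p *: e p) ->
  is_derive t0 1 (fun t => c * f (A + \sum_(p < k) u t 0 p *: e p))
    (c * \sum_(p < k) derive1 (fun t => u t 0 p) t0 *
        'D_(e p) f (A + \sum_(p < k) u t0 0 p *: e p)).
Proof. by move=> du df; have := is_deriveZ c (chain_line f A e u t0 du df); apply. Qed.

Lemma line_diff {n} (a v : 'rV[R]_n) (t : R) :
  differentiable (fun s : R => a + s *: v) t.
Proof.
apply: differentiableD; first exact: differentiable_cst.
apply: differentiableZl; exact: ex_diff.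
Qed.

End Chain2.

Section E.
Context {R : realType} {M N : nat} {d P : 'I_M.+1 -> nat}
  {X : 'I_M.+1 -> Type} {Y : Type}
  (x : forall m : 'I_M.+1, 'I_N -> X m) (y : 'I_N -> Y)
  (h : forall m : 'I_M.+1, 'rV[R]_(d m) -> X m -> 'rV[R]_(P m))
  (l : 'rV[R]_(\sum_(j < M.+1) P j) -> Y -> R).

Local Notation Emb := (@Emb R M P N).
Local Notation SP := (\sum_(j < M.+1) P j)%N.
Local Notation Rk := tagnat.Rank.

Lemma addr0R (a : R) : a + 0 = a. Proof. exact: addr0. Qed.
Lemma addZ0 {n} (a b : 'rV[R]_n) : a + 0 *: b = a.
Proof. by rewrite scale0r addr0. Qed.

Lemma pderivE {n} (g : 'rV[R]_n -> R) w k :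
  pderiv1 g w k = 'D_(delta_mx 0 k) g w.
Proof. by rewrite /pderiv1 line_deriveE scale0r addr0. Qed.

Definition cS (S : {set 'I_N}) : R := (#|S|%:R)^-1.

Lemma lossS_rowE S (Phi : Emb) :
  lossS y l S Phi = \sum_(i in S) cS S * l (rowE Phi i) (y i).
Proof. by rewrite /lossS mulr_sumr. Qed.

Hypothesis ldiff : forall (yy : Y) z, differentiable (l^~ yy) z.

Lemma pdE_loss S (Phi : Emb) m i (p : 'I_(P m)) :
  pdE m i p (lossS y l S) Phi =
  (if i \in S then cS S else 0) * 'D_(delta_mx 0 (Rk m p)) (l^~ (y i)) (rowE Phi i).
Proof.
rewrite /pdE.
set e := fun i' : 'I_N => if i == i' then delta_mx 0 (Rk m p) else (0 : 'rV[R]_SP).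
have -> : (fun t => lossS y l S (pertE Phi m i p t)) =
   (fun t => \sum_(i' in S) cS S * (l^~ (y i')) (rowE Phi i' + t *: e i')).
  by apply/funext => t; rewrite lossS_rowE; apply: eq_bigr => i' _; rewrite rowE_pert.
have Dv := is_derive_bigsum _ (index_enum 'I_N) (fun i' => i' \in S)
    (fun i' (t : R) => cS S * (l^~ (y i')) (rowE Phi i' + t *: e i')) (0 : R) 1
    (fun i' => cS S * 'D_(e i') (l^~ (y i')) (rowE Phi i' + 0 *: e i'))
    (fun i' _ => line_is_deriveM _ _ _ _ _ (diff_derivable (ldiff _ _))).
rewrite derive1E (@derive_val _ _ _ _ _ _ _ Dv).
case iS: (i \in S).
  rewrite (bigD1 i) // [\sum_(i0 in S | i0 != i) _]big1 => [|i' /andP[_ ne]]; last first.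
    by rewrite /e eq_sym (negbTE ne) derive0 mulr0.
  by rewrite /= addr0R /e eqxx addZ0.
rewrite mul0r big1 // => i' i'S; rewrite /e.
by case: eqP => [ii'|_]; [rewrite ii' i'S in iS | rewrite derive0 mulr0].
Qed.

Definition Kf (S : {set 'I_N}) m (i : 'I_N) (p : 'I_(P m)) : 'rV[R]_SP -> R :=
  fun z => (if i \in S then cS S else 0) * 'D_(delta_mx 0 (Rk m p)) (l^~ (y i)) z.

Lemma pdE_loss_fun S m i (p : 'I_(P m)) :
  pdE m i p (lossS y l S) = fun Phi => Kf S m i p (rowE Phi i).
Proof. by apply/funext => Phi; rewrite pdE_loss. Qed.

Lemma pdE_single (f : 'rV[R]_SP -> R) i j k (q : 'I_(P j)) (Phi : Emb) :
  pdE j k q (fun Phi => f (rowE Phi i)) Phi =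
  if k == i then 'D_(delta_mx 0 (Rk j q)) f (rowE Phi i) else 0.
Proof.
rewrite /pdE.
have -> : (fun t => f (rowE (pertE Phi j k q t) i)) =
  (fun t => f (rowE Phi i + t *: (if k == i then delta_mx 0 (Rk j q) else 0))).
  by apply/funext => t; rewrite rowE_pert.
rewrite line_deriveE scale0r addr0.
by case: (k == i) => //; rewrite derive0.
Qed.

Hypothesis ldiff2 : forall (yy : Y) z k,
  differentiable (fun w => pderiv1 (l^~ yy) w k) z.

Lemma Kf_diff S m i (p : 'I_(P m)) z : differentiable (Kf S m i p) z.
Proof.
have -> : Kf S m i p = (if i \in S then cS S else 0) *:
    (fun w => pderiv1 (l^~ (y i)) w (Rk m p)).
  by apply/funext => w; rewrite /Kf -pderivE.
exact: differentiableZ.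
Qed.

End E.

Section F.
Context {R : realType} {M N : nat} {d P : 'I_M.+1 -> nat}
  {X : 'I_M.+1 -> Type} {Y : Type}
  (x : forall m : 'I_M.+1, 'I_N -> X m) (y : 'I_N -> Y)
  (h : forall m : 'I_M.+1, 'rV[R]_(d m) -> X m -> 'rV[R]_(P m))
  (l : 'rV[R]_(\sum_(j < M.+1) P j) -> Y -> R).

Local Notation Emb := (@Emb R M P N).
Local Notation SP := (\sum_(j < M.+1) P j)%N.
Local Notation Rk := tagnat.Rank.

Hypothesis ldiff : forall (yy : Y) z, differentiable (l^~ yy) z.
Hypothesis hdiff : forall m (xi : X m) th, differentiable (fun th' => h m th' xi) th.

Definition Jc m (th : 'rV[R]_(d m)) (i : 'I_N) (kk : 'I_(d m)) (p : 'I_(P m)) : R :=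
  derive1 (fun t : R => h m (th + t *: delta_mx 0 kk) (x m i) 0 p) 0.

Definition dfw (Phi : Emb) m (V : 'I_N -> 'rV[R]_(P m)) : Emb :=
  @dfwith _ (fun j : 'I_M.+1 => 'I_N -> 'rV[R]_(P j)) Phi m V.

Lemma gradS_entry S m (Phi : Emb) th kk :
  gradS x y h l S m Phi th 0 kk =
  \sum_(i in S) \sum_(p < P m) Jc m th i kk p *
      pdE m i p (lossS y l S) (dfw Phi m (emb x h m th)).
Proof.
rewrite /gradS /grad mxE /pderiv1.
set A := fun i => rowE (dfw Phi m (fun _ => 0)) i.
set e := fun p : 'I_(P m) => (delta_mx 0 (Rk m p) : 'rV[R]_SP).
set u := fun i (t : R) => h m (th + t *: delta_mx 0 kk) (x m i).
have -> : (fun t => lossS y l S (dfw Phi m (emb x h m (th + t *: delta_mx 0 kk)))) =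
   (fun t => \sum_(i in S) cS S * (l^~ (y i)) (A i + \sum_(p < P m) u i t 0 p *: e p)).
  by apply/funext => t; rewrite lossS_rowE; apply: eq_bigr => i _; rewrite /dfw rowE_dfw.
have du : forall i, differentiable (u i) 0.
  move=> i; rewrite /u -[(fun t : R => _)]/((fun th' => h m th' (x m i)) \o (fun t : R => th + t *: delta_mx 0 kk)).
  by apply: differentiable_comp; [exact: line_diff | exact: hdiff].
have Dv := is_derive_bigsum _ (index_enum 'I_N) (fun i => i \in S)
   (fun i (t : R) => cS S * (l^~ (y i)) (A i + \sum_(p < P m) u i t 0 p *: e p)) 0 1
   (fun i => cS S * \sum_(p < P m) derive1 (fun t => u i t 0 p) 0 *
        'D_(e p) (l^~ (y i)) (A i + \sum_(p < P m) u i 0 0 p *: e p))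
   (fun i _ => chain_lineM _ _ _ _ _ _ (du i) (ldiff _ _)).
rewrite derive1E (@derive_val _ _ _ _ _ _ _ Dv).
apply: eq_bigr => i iS; rewrite mulr_sumr; apply: eq_bigr => p _.
rewrite (pdE_loss _ _ ldiff) iS /Jc mulrCA; congr (_ * (_ * _)).
rewrite /dfw rowE_dfw /A /u scale0r addr0 /dfw //.
Qed.

End F.

Section CS.
Context {R : realType}.

Lemma sum_prod (I : finType) (A : pred I) (f g : I -> R) :
  \sum_(i | A i) \sum_(j | A j) f i * g j = (\sum_(i | A i) f i) * (\sum_(j | A j) g j).
Proof. by rewrite mulr_suml; apply: eq_bigr => i _; rewrite mulr_sumr. Qed.

Lemma CS (I : finType) (A : pred I) (a b : I -> R) :
  (\sum_(i | A i) a i * b i) ^+ 2 <=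
  (\sum_(i | A i) a i ^+ 2) * (\sum_(i | A i) b i ^+ 2).
Proof.
have H : \sum_(i | A i) \sum_(j | A j) (a i * b j - a j * b i) ^+ 2 =
   2 * ((\sum_(i | A i) a i ^+ 2) * (\sum_(i | A i) b i ^+ 2) -
        (\sum_(i | A i) a i * b i) ^+ 2).
  rewrite (eq_bigr (fun i => \sum_(j | A j) (a i ^+ 2 * b j ^+ 2 + b i ^+ 2 * a j ^+ 2
        - 2 * ((a i * b i) * (a j * b j))))); last first.
    by move=> i _; apply: eq_bigr => j _; ring.
  under eq_bigr do rewrite sumrB big_split /=.
  rewrite sumrB big_split /= !sum_prod.
  under [X in _ - X = _]eq_bigr do rewrite -mulr_sumr.
  rewrite -mulr_sumr sum_prod expr2; ring.
have : 0 <= \sum_(i | A i) \sum_(j | A j) (a i * b j - a j * b i) ^+ 2.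
  by apply: sumr_ge0 => i _; apply: sumr_ge0 => j _; apply: sqr_ge0.
rewrite H; lra.
Qed.

Lemma CS2 (I J : finType) (A : pred I) (a b : I -> J -> R) :
  (\sum_(i | A i) \sum_(j : J) a i j * b i j) ^+ 2 <=
  (\sum_(i | A i) \sum_(j : J) a i j ^+ 2) * (\sum_(i | A i) \sum_(j : J) b i j ^+ 2).
Proof.
rewrite !(pair_big A xpredT) /=.
exact: (CS _ (fun q : I * J => A q.1 && true) (fun q => a q.1 q.2) (fun q => b q.1 q.2)).
Qed.

Lemma sqnorm_ge0 {n} (v : 'rV[R]_n) : 0 <= sqnorm v.
Proof. by apply: sumr_ge0 => k _; apply: sqr_ge0. Qed.

Definition dotv {n} (u v : 'rV[R]_n) : R := \sum_(k < n) u 0 k * v 0 k.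

Lemma sqnormD {n} (u v : 'rV[R]_n) :
  sqnorm (u + v) = sqnorm u + 2 * dotv u v + sqnorm v.
Proof.
rewrite /sqnorm /dotv mulr_sumr -!big_split /=; apply: eq_bigr => k _.
rewrite !mxE; ring.
Qed.

Lemma dotv_le {n} (u v : 'rV[R]_n) : dotv u v <= enorm u * enorm v.
Proof.
have := CS _ xpredT (fun k => u 0 k) (fun k => v 0 k).
rewrite -/(dotv u v) -/(sqnorm u) -/(sqnorm v) => H.
rewrite /enorm -sqrtrM ?sqnorm_ge0 //.
case: (lerP (dotv u v) 0) => [le0|gt0].
  by apply: le_trans le0 _; apply: sqrtr_ge0.
by rewrite -[X in X <= _](ger0_norm (ltW gt0)) -sqrtr_sqr ler_wsqrtr.
Qed.

Lemma enorm_ge0 {n} (v : 'rV[R]_n) : 0 <= enorm v.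
Proof. exact: sqrtr_ge0. Qed.

Lemma enorm_sq {n} (v : 'rV[R]_n) : enorm v ^+ 2 = sqnorm v.
Proof. by rewrite /enorm sqr_sqrtr // sqnorm_ge0. Qed.

Lemma enormD {n} (u v : 'rV[R]_n) : enorm (u + v) <= enorm u + enorm v.
Proof.
rewrite -(ler_pXn2r (n:=2)) // ?nnegrE ?addr_ge0 ?enorm_ge0 //.
rewrite enorm_sq sqnormD -!enorm_sq.
have := dotv_le u v; lra.
Qed.

Lemma enormZ {n} (c : R) (v : 'rV[R]_n) : enorm (c *: v) = `|c| * enorm v.
Proof.
rewrite /enorm /sqnorm.
rewrite (eq_bigr (fun k => c ^+ 2 * v 0 k ^+ 2)); last by move=> k _; rewrite !mxE exprMn.
by rewrite -mulr_sumr sqrtrM ?sqr_ge0 // sqrtr_sqr.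
Qed.

Lemma enormN {n} (v : 'rV[R]_n) : enorm (- v) = enorm v.
Proof. by rewrite -scaleN1r enormZ normrN normr1 mul1r. Qed.

Lemma enormB {n} (u v : 'rV[R]_n) : enorm (u - v) = enorm (v - u).
Proof. by rewrite -enormN opprB. Qed.

Lemma enorm_sum {n} (k : nat) (F : nat -> 'rV[R]_n) :
  enorm (\sum_(s < k) F s) <= \sum_(s < k) enorm (F s).
Proof.
elim: k => [|k IH]; first by rewrite !big_ord0 /enorm /sqnorm big1 ?sqrtr0 // => q _; rewrite mxE expr0n.
rewrite !big_ord_recr /=; apply: (le_trans (enormD _ _)); by rewrite lerD2r.
Qed.

End CS.

Section H.
Context {R : realType} {M N : nat} {d P : 'I_M.+1 -> nat}
  {X : 'I_M.+1 -> Type} {Y : Type}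
  (x : forall m : 'I_M.+1, 'I_N -> X m) (y : 'I_N -> Y)
  (h : forall m : 'I_M.+1, 'rV[R]_(d m) -> X m -> 'rV[R]_(P m))
  (l : 'rV[R]_(\sum_(j < M.+1) P j) -> Y -> R).

Local Notation Emb := (@Emb R M P N).
Local Notation SP := (\sum_(j < M.+1) P j)%N.
Local Notation Rk := tagnat.Rank.

Hypothesis ldiff : forall (yy : Y) z, differentiable (l^~ yy) z.
Hypothesis ldiff2 : forall (yy : Y) z k,
  differentiable (fun w => pderiv1 (l^~ yy) w k) z.

Lemma sq_le_of_sqrt (a b : R) : 0 <= a -> Num.sqrt a <= b -> a <= b ^+ 2.
Proof.
move=> a0 sab; rewrite -(sqr_sqrtr a0).
by rewrite ler_pXn2r // ?nnegrE ?sqrtr_ge0 // (le_trans (sqrtr_ge0 a) sab).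
Qed.

Lemma hess_sq_ge0 S m (Phi : Emb) : 0 <= hess_sq y l S m Phi.
Proof. by do 5! (apply: sumr_ge0 => ? _); apply: sqr_ge0. Qed.

Lemma mvt_part S m (Psi1 Psi2 : Emb) Hm :
  (forall Phi, Num.sqrt (hess_sq y l S m Phi) <= Hm) ->
  \sum_(i in S) \sum_(p < P m)
     (pdE m i p (lossS y l S) Psi1 - pdE m i p (lossS y l S) Psi2) ^+ 2
  <= Hm ^+ 2 * \sum_(i in S) sqnorm (rowE Psi1 i - rowE Psi2 i).
Proof.
move=> HH.
set K := Kf y l S m.
set v := fun i p => K i p (rowE Psi1 i) - K i p (rowE Psi2 i).
have -> : \sum_(i in S) \sum_(p < P m)
     (pdE m i p (lossS y l S) Psi1 - pdE m i p (lossS y l S) Psi2) ^+ 2 =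
    \sum_(i in S) \sum_(p < P m) v i p ^+ 2.
  by apply: eq_bigr => i _; apply: eq_bigr => p _; rewrite !(pdE_loss_fun _ _ ldiff).
set Vs := \sum_(i in S) \sum_(p < P m) v i p ^+ 2.
set E := \sum_(i in S) sqnorm (rowE Psi1 i - rowE Psi2 i).
set D := fun i => rowE Psi1 i - rowE Psi2 i.
set z := fun i (s : R) => rowE Psi2 i + s *: D i.
set phi := fun s : R => \sum_(i in S) \sum_(p < P m) v i p * K i p (z i s).
set phi' := fun s : R => \sum_(i in S) \sum_(p < P m) v i p * 'D_(D i) (K i p) (z i s).
have Dphi : forall s : R, is_derive s (1 : R) phi (phi' s).
  move=> s.
  apply: (is_derive_bigsum _ _ _ (fun i (t : R) => \sum_(p < P m) v i p * K i p (z i t))) => i _.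
  apply: (is_derive_bigsum _ _ _ (fun p (t : R) => v i p * K i p (rowE Psi2 i + t *: D i))) => p _.
  by apply: line_is_deriveM; apply: diff_derivable; apply: Kf_diff.
have cont : ({within `[(0:R), 1], continuous phi})%classic.
  apply: derivable_within_continuous => s _.
  exact: (@ex_derive _ _ _ _ _ _ _ (Dphi s)).
have [c c01 Hc] := MVT ltr01 (fun s _ => Dphi s) cont.
have phi10 : phi 1 - phi 0 = Vs.
  rewrite /phi -sumrB; apply: eq_bigr => i _; rewrite -sumrB; apply: eq_bigr => p _.
  by rewrite /z scale1r scale0r addr0 /D [rowE Psi2 i + _]addrC subrK -mulrBr /v expr2.
rewrite phi10 subr0 mulr1 in Hc.
have Vs0 : 0 <= Vs by do 2! (apply: sumr_ge0 => ? _); apply: sqr_ge0.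
have E0 : 0 <= E by apply: sumr_ge0 => ? _; apply: sqnorm_ge0.
pose Psic : Emb := fun j k => Psi2 j k + c *: (Psi1 j k - Psi2 j k).
have rowc : forall i, rowE Psic i = z i c.
  by move=> i; rewrite /Psic rowE_lin rowE_sub.
have W1 : forall i p, i \in S ->
  ('D_(D i) (K i p) (z i c)) ^+ 2 <= sqnorm (D i) *
     \sum_(j < M.+1) \sum_(k in S) \sum_(q < P j)
        (pdE j k q (pdE m i p (lossS y l S)) Psic) ^+ 2.
  move=> i p iS.
  rewrite (derive_lin_row _ _ _ (Kf_diff _ _ ldiff2 _ _ _ _ _)).
  apply: (le_trans (CS _ xpredT _ _)); rewrite -/(sqnorm (D i)).
  apply: ler_wpM2l; first exact: sqnorm_ge0.
  rewrite (sum_Rank (fun r => ('D_(delta_mx 0 r) (K i p) (z i c)) ^+ 2)).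
  apply: ler_sum => j _.
  rewrite (bigD1 i) //= -[X in X <= _]addr0; apply: lerD; last first.
    by apply: sumr_ge0 => ? _; apply: sumr_ge0 => ? _; apply: sqr_ge0.
  apply: ler_sum => q _.
  by rewrite (pdE_loss_fun _ _ ldiff) pdE_single eqxx rowc.
have W2 : (phi' c) ^+ 2 <= Vs * (E * Hm ^+ 2).
  apply: (le_trans (CS2 _ _ _ _ _)); rewrite -/Vs.
  apply: ler_wpM2l => //.
  apply: (@le_trans _ _ (E * hess_sq y l S m Psic)); last first.
    apply: ler_wpM2l => //; apply: sq_le_of_sqrt => //; exact: hess_sq_ge0.
  rewrite /hess_sq mulr_sumr; apply: ler_sum => i iS; rewrite mulr_sumr.
  apply: ler_sum => p _; apply: (le_trans (W1 i p iS)); apply: ler_wpM2r.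
    by do 3! (apply: sumr_ge0 => ? _); apply: sqr_ge0.
  rewrite /E (bigD1 i) //= -[X in X <= _]addr0; apply: lerD => //.
  by apply: sumr_ge0 => ? _; apply: sqnorm_ge0.
rewrite -Hc in W2.
rewrite mulrC; case: (ltrP 0 Vs) => [Vpos|Vle0]; last first.
  by apply: (le_trans Vle0); apply: mulr_ge0 => //; apply: sqr_ge0.
rewrite expr2 in W2; rewrite -(ler_pM2l Vpos); exact: W2.
Qed.

End H.

Section I.
Context {R : realType} {M N : nat} {d P : 'I_M.+1 -> nat}
  {X : 'I_M.+1 -> Type} {Y : Type}
  (x : forall m : 'I_M.+1, 'I_N -> X m) (y : 'I_N -> Y)
  (h : forall m : 'I_M.+1, 'rV[R]_(d m) -> X m -> 'rV[R]_(P m))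
  (l : 'rV[R]_(\sum_(j < M.+1) P j) -> Y -> R).

Local Notation Emb := (@Emb R M P N).

Hypothesis ldiff : forall (yy : Y) z, differentiable (l^~ yy) z.
Hypothesis ldiff2 : forall (yy : Y) z k,
  differentiable (fun w => pderiv1 (l^~ yy) w k) z.
Hypothesis hdiff : forall m (xi : X m) th, differentiable (fun th' => h m th' xi) th.

Lemma entryB {n} (A B : 'rV[R]_n) k : (A - B) 0 k = A 0 k - B 0 k.
Proof. by rewrite !mxE. Qed.

Lemma AL S m (Phi1 Phi2 : Emb) th Hm Gm :
  (forall Phi, Num.sqrt (hess_sq y l S m Phi) <= Hm) ->
  Num.sqrt (jac_sq x h S m th) <= Gm ->
  sqnorm (gradS x y h l S m Phi1 th - gradS x y h l S m Phi2 th) <=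
  Hm ^+ 2 * Gm ^+ 2 * \sum_(i in S)
     sqnorm (rowE (dfw Phi1 m (emb x h m th)) i - rowE (dfw Phi2 m (emb x h m th)) i).
Proof.
move=> HH GG.
set Psi1 := dfw Phi1 m (emb x h m th).
set Psi2 := dfw Phi2 m (emb x h m th).
set v := fun i p => pdE m i p (lossS y l S) Psi1 - pdE m i p (lossS y l S) Psi2.
set Vs := \sum_(i in S) \sum_(p < P m) v i p ^+ 2.
have HV : Vs <= Hm ^+ 2 * \sum_(i in S) sqnorm (rowE Psi1 i - rowE Psi2 i).
  exact: (mvt_part _ _ ldiff ldiff2).
have entry : forall kk, (gradS x y h l S m Phi1 th - gradS x y h l S m Phi2 th) 0 kk =
   \sum_(i in S) \sum_(p < P m) Jc x h m th i kk p * v i p.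
  move=> kk; rewrite entryB !(gradS_entry _ _ _ _ ldiff hdiff) -sumrB.
  by apply: eq_bigr => i _; rewrite -sumrB; apply: eq_bigr => p _; rewrite -mulrBr.
have jac : jac_sq x h S m th =
    \sum_(kk < d m) \sum_(i in S) \sum_(p < P m) Jc x h m th i kk p ^+ 2.
  symmetry; rewrite exchange_big /=; apply: eq_bigr => i _.
  by rewrite exchange_big.
rewrite [X in X <= _]/sqnorm.
under eq_bigr do rewrite entry.
apply: (@le_trans _ _ (\sum_(kk < d m) (\sum_(i in S) \sum_(p < P m) Jc x h m th i kk p ^+ 2) * Vs)).
  by apply: ler_sum => kk _; apply: CS2.
have J0 : 0 <= jac_sq x h S m th by do 3! (apply: sumr_ge0 => ? _); apply: sqr_ge0.
rewrite -mulr_suml -jac mulrC.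
apply: (@le_trans _ _ ((Hm ^+ 2 * \sum_(i in S) sqnorm (rowE Psi1 i - rowE Psi2 i)) * jac_sq x h S m th)).
  by apply: ler_wpM2r.
have E0 : 0 <= \sum_(i in S) sqnorm (rowE Psi1 i - rowE Psi2 i).
  by apply: sumr_ge0 => ? _; apply: sqnorm_ge0.
have JG : jac_sq x h S m th <= Gm ^+ 2 by exact: sq_le_of_sqrt.
have GJ : 0 <= Gm ^+ 2 - jac_sq x h S m th by rewrite subr_ge0.
have := mulr_ge0 (mulr_ge0 (sqr_ge0 Hm) E0) GJ.
move: E0 JG GJ; set E := \sum_(i in S) _; set J := jac_sq _ _ _ _ _ => E0 JG GJ.
set a := Hm ^+ 2; set g := Gm ^+ 2; nra.
Qed.
End I.

Section J.
Context {R : realType} {M N : nat} {d P : 'I_M.+1 -> nat}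
  {X : 'I_M.+1 -> Type} {Y : Type}
  (x : forall m : 'I_M.+1, 'I_N -> X m) (y : 'I_N -> Y)
  (h : forall m : 'I_M.+1, 'rV[R]_(d m) -> X m -> 'rV[R]_(P m))
  (l : 'rV[R]_(\sum_(j < M.+1) P j) -> Y -> R)
  (C : forall m : 'I_M.+1, 'rV[R]_(P m) -> 'rV[R]_(P m)).

Local Notation Emb := (@Emb R M P N).
Local Notation Rk := tagnat.Rank.

Lemma sqnorm_rowE (Psi : Emb) i : sqnorm (rowE Psi i) = \sum_(j < M.+1) sqnorm (Psi j i).
Proof.
rewrite /sqnorm (sum_Rank (fun r => rowE Psi i 0 r ^+ 2)).
by apply: eq_bigr => j _; apply: eq_bigr => q _; rewrite rowE_Rank.
Qed.

Lemma err_rowE (S : {set 'I_N}) T0 m th :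
  \sum_(i in S) sqnorm (rowE (dfw (compEmb x h C T0) m (emb x h m th)) i -
                        rowE (dfw (trueEmb x h T0) m (emb x h m th)) i)
  = err_sq x h C S T0 m.
Proof.
under eq_bigr do rewrite -rowE_sub sqnorm_rowE.
rewrite exchange_big /= (bigD1 m) //= big1 ?add0r; last first.
  move=> i _; rewrite /dfw !dfw_in subrr /sqnorm big1 // => k _.
  by rewrite mxE expr0n.
rewrite /err_sq; apply: eq_bigr => j jm; apply: eq_bigr => i _.
by rewrite /dfw !dfw_out 1?eq_sym.
Qed.

Definition pset (T0 : @Params R M d) m (th : 'rV[R]_(d m)) : @Params R M d :=
  @dfwith _ (fun j : 'I_M.+1 => 'rV[R]_(d j)) T0 m th.

Lemma dfp_in (T0 : @Params R M d) m (th : 'rV[R]_(d m)) : pset T0 m th m = th.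
Proof. exact: dfwith_in. Qed.

Lemma dfp_out (T0 : @Params R M d) m (th : 'rV[R]_(d m)) j : m != j -> pset T0 m th j = T0 j.
Proof. exact: dfwith_out. Qed.

Lemma gradSTheta_pset S T0 m th :
  gradSTheta x y h l S m (pset T0 m th) = gradS x y h l S m (trueEmb x h T0) th.
Proof.
rewrite /gradSTheta dfp_in /gradS; congr grad; apply/funext => th'.
congr lossS; apply: functional_extensionality_dep => j.
case: (eqVneq m j) => [<-|ne]; first by rewrite !dfw_in.
by rewrite !dfw_out // /trueEmb dfp_out.
Qed.

Lemma psqnorm_pset T0 m th :
  psqnorm (psub (pset T0 m th) T0) = sqnorm (th - T0 m).
Proof.
rewrite /psqnorm (bigD1 m) //= big1 ?addr0 /psub ?dfp_in //.
move=> j jm; rewrite dfp_out 1?eq_sym // subrr /sqnorm big1 // => k _.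
by rewrite mxE expr0n.
Qed.

Lemma traj_eq S eta T0 k m :
  traj x y h l C S eta T0 k m =
  T0 m - eta *: \sum_(s < k) Ghat x y h l C S eta T0 s m.
Proof.
elim: k => [|k IH]; first by rewrite big_ord0 scaler0 subr0.
rewrite big_ord_recr /= {1}IH /Ghat scalerDr opprD addrA.
by [].
Qed.


End J.

Section K.
Context {R : realType}.

Lemma rec_bound (Q : nat) (a : nat -> R) (c e g : R) :
  0 <= c -> c * Q%:R * 4 <= 1 -> 0 <= e -> 0 <= g ->
  (forall k, (k < Q)%N -> a k <= e + c * \sum_(s < k) (a s + g)) ->
  forall k, (k < Q)%N -> a k <= 4 / 3 * (c * Q%:R * g + e).
Proof.
move=> c0 cQ e0 g0 Ha.
set A := 4 / 3 * (c * Q%:R * g + e).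
have Q0 : 0 <= Q%:R :> R by [].
have A0 : 0 <= A.
  by rewrite /A mulr_ge0 // addr_ge0 // mulr_ge0 // mulr_ge0.
suff H : forall n k, (k < n)%N -> (k < Q)%N -> a k <= A.
  by move=> k kQ; exact: (H k.+1 k (ltnSn k) kQ).
elim => [|n IH] k //; rewrite ltnS leq_eqVlt => /orP[/eqP -> | kn] kQ; last exact: IH.
apply: (le_trans (Ha n kQ)).
have Sb : \sum_(s < n) (a s + g) <= n%:R * (A + g).
  apply: (@le_trans _ _ (\sum_(s < n) (A + g))).
    apply: ler_sum => s _; rewrite lerD2r; apply: IH => //.
    exact: ltn_trans (ltn_ord s) kQ.
  by rewrite sumr_const card_ord mulr_natl.
have nQ : n%:R <= Q%:R :> R by rewrite ler_nat ltnW.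
have S2 : c * \sum_(s < n) (a s + g) <= c * (Q%:R * (A + g)).
  apply: ler_wpM2l => //; apply: (le_trans Sb); apply: ler_wpM2r => //.
  exact: addr_ge0.
apply: (le_trans (lerD (lexx e) S2)).
move: cQ A0; rewrite /A; set q := Q%:R; nra.
Qed.

End K.

Section K2.
Context {R : realType} {M N : nat} {d P : 'I_M.+1 -> nat}
  {X : 'I_M.+1 -> Type} {Y : Type}
  (x : forall m : 'I_M.+1, 'I_N -> X m) (y : 'I_N -> Y)
  (h : forall m : 'I_M.+1, 'rV[R]_(d m) -> X m -> 'rV[R]_(P m))
  (l : 'rV[R]_(\sum_(j < M.+1) P j) -> Y -> R)
  (C : forall m : 'I_M.+1, 'rV[R]_(P m) -> 'rV[R]_(P m)).

Lemma per_Sm (S : {set 'I_N}) m (Q : nat) (eta : R) (T0 : @Params R M d)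
    (Lmm Hm Gm err : R) :
  0 <= Lmm -> 0 <= eta -> 0 <= Hm -> 0 <= Gm -> 0 <= err -> (0 < Q)%N ->
  Lmm * eta * Q%:R * 4 <= 1 ->
  (forall th, enorm (gradS x y h l S m (trueEmb x h T0) th - gradSTheta x y h l S m T0)
      <= Lmm * enorm (th - T0 m)) ->
  (forall th, sqnorm (gradS x y h l S m (compEmb x h C T0) th -
                      gradS x y h l S m (trueEmb x h T0) th) <= Hm ^+ 2 * Gm ^+ 2 * err) ->
  forall k, (k < Q)%N ->
  sqnorm (Ghat x y h l C S eta T0 k m - G0 x y h l S T0 m) <=
  16 * Q%:R ^+ 2 * eta ^+ 2 * Lmm ^+ 2 * sqnorm (G0 x y h l S T0 m)
  + 64 * Q%:R ^+ 2 * Hm ^+ 2 * Gm ^+ 2 * err.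
Proof.
move=> L0 eta0 H0 G0' err0 Qpos cQ HL HA.
set e := Hm * Gm * Num.sqrt err.
set g := enorm (G0 x y h l S T0 m).
set a := fun s : nat => enorm (Ghat x y h l C S eta T0 s m - G0 x y h l S T0 m).
have e0 : 0 <= e by rewrite /e !mulr_ge0 // sqrtr_ge0.
have g0 : 0 <= g by exact: enorm_ge0.
have Ha : forall k, (k < Q)%N -> a k <= e + Lmm * eta * \sum_(s < k) (a s + g).
  move=> k _; rewrite /a.
  set th := traj x y h l C S eta T0 k m.
  have -> : Ghat x y h l C S eta T0 k m - G0 x y h l S T0 m =
     (gradS x y h l S m (compEmb x h C T0) th - gradS x y h l S m (trueEmb x h T0) th)
     + (gradS x y h l S m (trueEmb x h T0) th - gradSTheta x y h l S m T0).
    by rewrite /Ghat /G0 addrA subrK.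
  apply: (le_trans (enormD _ _)); apply: lerD.
    rewrite /enorm /e -(ger0_norm (mulr_ge0 H0 G0')) -sqrtr_sqr -sqrtrM ?sqr_ge0 //.
    by rewrite ler_wsqrtr // exprMn.
  apply: (le_trans (HL th)); rewrite -mulrA; apply: ler_wpM2l => //.
  rewrite /th traj_eq addrC addKr enormN enormZ ger0_norm //; apply: ler_wpM2l => //.
  apply: (le_trans (enorm_sum _ (fun s => Ghat x y h l C S eta T0 s m))).
  apply: ler_sum => s _; rewrite /a.
  rewrite -{1}(subrK (G0 x y h l S T0 m) (Ghat x y h l C S eta T0 s m)).
  exact: enormD.
have cQ' : Lmm * eta * Q%:R * 4 <= 1 by [].
move=> k kQ.
have Hk := rec_bound Q a (Lmm * eta) e g (mulr_ge0 L0 eta0) cQ' e0 g0 Ha k kQ.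
have ak0 : 0 <= a k by exact: enorm_ge0.
rewrite -enorm_sq -/(a k).
have e2 : e ^+ 2 = Hm ^+ 2 * Gm ^+ 2 * err.
  by rewrite /e !exprMn sqr_sqrtr.
have g2 : g ^+ 2 = sqnorm (G0 x y h l S T0 m) by rewrite /g enorm_sq.
rewrite -g2.
have Q1 : 1 <= Q%:R :> R by rewrite ler1n.
have : a k ^+ 2 <= (4 / 3 * (Lmm * eta * Q%:R * g + e)) ^+ 2.
  by rewrite ler_pXn2r // nnegrE // (le_trans ak0 Hk).
have h1 : 0 <= (Lmm * eta * Q%:R * g - e) ^+ 2 by apply: sqr_ge0.
have h2 : 0 <= (Q%:R ^+ 2 - 1) * e ^+ 2.
  apply: mulr_ge0; last exact: sqr_ge0.
  rewrite subr_ge0 expr2 -[1 in X in X <= _]mulr1; exact: ler_pM.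
move: h1 h2 e2; set q := Q%:R; set A := a k; move=> h1 h2 e2 H.
nra.
Qed.

End K2.

Lemma variance {R : realType} (T : finType) n (w : T -> R) (gS : T -> 'rV[R]_n)
   (gF : 'rV[R]_n) :
  \sum_(S : T) w S = 1 -> \sum_(S : T) w S *: gS S = gF ->
  \sum_(S : T) w S * sqnorm (gS S) =
  sqnorm gF + \sum_(S : T) w S * sqnorm (gF - gS S).
Proof.
move=> w1 wg.
have wgk : forall k, \sum_(S : T) w S * gS S 0 k = gF 0 k.
  by move=> k; rewrite -wg summxE; apply: eq_bigr => S _; rewrite !mxE.
rewrite /sqnorm.
under eq_bigr do rewrite mulr_sumr.
under [X in _ = _ + X]eq_bigr do rewrite mulr_sumr.
rewrite exchange_big [X in _ = _ + X]exchange_big -big_split /=.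
apply: eq_bigr => k _.
have -> : \sum_(S : T) w S * (gF - gS S) 0 k ^+ 2 =
    gF 0 k ^+ 2 * \sum_(S : T) w S - 2 * gF 0 k * \sum_(S : T) w S * gS S 0 k
    + \sum_(S : T) w S * gS S 0 k ^+ 2.
  rewrite !mulr_sumr -sumrB -big_split /=; apply: eq_bigr => S _.
  rewrite !mxE; ring.
rewrite w1 wgk; ring.
Qed.

Lemma eqle {R : realType} (a b : R) : a = b -> a <= b.
Proof. by move=> ->. Qed.

Theorem lemma2 (R : realType) (M N B Q : nat) (d P : 'I_M.+1 -> nat)
  (X : 'I_M.+1 -> Type) (Y : Type)
  (x : forall m : 'I_M.+1, 'I_N -> X m) (y : 'I_N -> Y)
  (h : forall m : 'I_M.+1, 'rV[R]_(d m) -> X m -> 'rV[R]_(P m))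
  (l : 'rV[R]_(\sum_(j < M.+1) P j) -> Y -> R)
  (C : forall m : 'I_M.+1, 'rV[R]_(P m) -> 'rV[R]_(P m))
  (pB : {set 'I_N} -> R)
  (L : R) (Lm sigma H G : 'I_M.+1 -> R) (eta : R) (T0 : @Params R M d)
  (* the server: h_0(theta_0; x) = theta_0 *)
  (hd0 : d ord0 = P ord0)
  (hh0 : forall (th : 'rV[R]_(d ord0)) (xi : X ord0),
           h ord0 th xi = castmx (erefl 1%N, hd0) th)
  (* the mini-batch distribution: a probability on batches of B samples *)
  (pB_ge0 : forall S, 0 <= pB S)
  (pB_sum1 : \sum_(S : {set 'I_N}) pB S = 1)
  (pB_size : forall S, pB S != 0 -> #|S| = B)
  (* smoothness implicit in the paper (gradients / Hessians exist) *)
  (l_diff : forall (yy : Y) z, differentiable (l^~ yy) z)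
  (l_diff2 : forall (yy : Y) z k,
      differentiable (fun w => pderiv1 (l^~ yy) w k) z)
  (h_diff : forall m (xi : X m) th, differentiable (fun th' => h m th' xi) th)
  (* (A1) *)
  (L_ge0 : 0 <= L) (Lm_ge0 : forall m, 0 <= Lm m)
  (A1 : forall T1 T2 : @Params R M d,
      Num.sqrt (psqnorm (fun m => gradF x y h l m T1 - gradF x y h l m T2))
        <= L * Num.sqrt (psqnorm (psub T1 T2)))
  (A1m : forall (S : {set 'I_N}) m (T1 T2 : @Params R M d), #|S| = B ->
      enorm (gradSTheta x y h l S m T1 - gradSTheta x y h l S m T2)
        <= Lm m * Num.sqrt (psqnorm (psub T1 T2)))
  (* (A2) *)
  (A2 : forall m (T : @Params R M d),
      \sum_(S : {set 'I_N}) pB S *: gradSTheta x y h l S m T = gradF x y h l m T)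
  (* (A3) *)
  (sigma_ge0 : forall m, 0 <= sigma m)
  (A3 : forall m (T : @Params R M d),
      \sum_(S : {set 'I_N}) pB S * sqnorm (gradF x y h l m T - gradSTheta x y h l S m T)
        <= sigma m ^+ 2 / B%:R)
  (* (A4) *)
  (H_ge0 : forall m, 0 <= H m)
  (A4 : forall (S : {set 'I_N}) m (Phi : @Emb R M P N), #|S| = B ->
      Num.sqrt (hess_sq y l S m Phi) <= H m)
  (* (A5) *)
  (G_ge0 : forall m, 0 <= G m)
  (A5 : forall (S : {set 'I_N}) m (th : 'rV[R]_(d m)), #|S| = B ->
      Num.sqrt (jac_sq x h S m th) <= G m)
  (* step size *)
  (Q_gt0 : (0 < Q)%N) (eta_gt0 : 0 < eta)
  (eta_le : eta * (4 * Q%:R * \big[Num.max/0]_(m < M.+1) Lm m) <= 1) :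
  \sum_(k < Q) \sum_(S : {set 'I_N})
     pB S * psqnorm (psub (Ghat x y h l C S eta T0 k) (G0 x y h l S T0))
  <= 16 * Q%:R ^+ 3 * eta ^+ 2 *
       \sum_(m < M.+1) Lm m ^+ 2 * sqnorm (gradF x y h l m T0)
   + 16 * Q%:R ^+ 3 * eta ^+ 2 *
       \sum_(m < M.+1) Lm m ^+ 2 * (sigma m ^+ 2 / B%:R)
   + 64 * Q%:R ^+ 3 *
       \sum_(m < M.+1) H m ^+ 2 * G m ^+ 2 *
          (\sum_(S : {set 'I_N}) pB S * err_sq x h C S T0 m).

Proof.
have eta0 : 0 <= eta := ltW eta_gt0.
have Q0 : 0 <= Q%:R :> R by [].
have cQ : forall m, Lm m * eta * Q%:R * 4 <= 1.
  move=> m; apply: le_trans eta_le.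
  have Lmax : Lm m <= \big[Num.max/0]_(m0 < M.+1) Lm m0 by exact: le_bigmax.
  move: Lmax; set mx := \big[Num.max/0]_(m0 < M.+1) Lm m0; set q := Q%:R => Lmax.
  have D0 : 0 <= mx - Lm m by rewrite subr_ge0.
  have := mulr_ge0 (mulr_ge0 eta0 Q0) D0.
  nra.
have err0 : forall S m, 0 <= err_sq x h C S T0 m.
  by move=> S m; do 2! (apply: sumr_ge0 => ? _); apply: sqnorm_ge0.
have key : forall S m k, pB S != 0 -> (k < Q)%N ->
   sqnorm (Ghat x y h l C S eta T0 k m - G0 x y h l S T0 m) <=
   16 * Q%:R ^+ 2 * eta ^+ 2 * Lm m ^+ 2 * sqnorm (G0 x y h l S T0 m)
   + 64 * Q%:R ^+ 2 * H m ^+ 2 * G m ^+ 2 * err_sq x h C S T0 m.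
  move=> S m k pS kQ; have SB := pB_size S pS.
  apply: (per_Sm x y h l C S m Q eta T0 (Lm m) (H m) (G m) (err_sq x h C S T0 m)) => //.
  - move=> th; have := A1m S m (pset T0 m th) T0 SB.
    by rewrite gradSTheta_pset psqnorm_pset.
  - move=> th; rewrite -(err_rowE x h C S T0 m th).
    apply: (AL x y h l l_diff l_diff2 h_diff) => [Phi|]; [exact: A4 | exact: A5].
set a := fun m => 16 * Q%:R ^+ 2 * eta ^+ 2 * Lm m ^+ 2.
set b := fun m => 64 * Q%:R ^+ 2 * H m ^+ 2 * G m ^+ 2.
have a0 : forall m, 0 <= a m.
  by move=> m; rewrite /a !mulr_ge0 // ?exprn_ge0 // sqr_ge0.
have step1 : \sum_(k < Q) \sum_(S : {set 'I_N})
     pB S * psqnorm (psub (Ghat x y h l C S eta T0 k) (G0 x y h l S T0))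
   <= \sum_(m < M.+1) (Q%:R * a m * \sum_(S : {set 'I_N}) pB S * sqnorm (G0 x y h l S T0 m)
        + Q%:R * b m * \sum_(S : {set 'I_N}) pB S * err_sq x h C S T0 m).
  apply: (@le_trans _ _ (\sum_(k < Q) \sum_(S : {set 'I_N}) pB S *
       \sum_(m < M.+1) (a m * sqnorm (G0 x y h l S T0 m) + b m * err_sq x h C S T0 m))).
    apply: ler_sum => k _; apply: ler_sum => S _.
    have [->|pS] := eqVneq (pB S) 0; first by rewrite !mul0r.
    apply: ler_wpM2l => //; rewrite /psqnorm /psub; apply: ler_sum => m _.
    exact: key.
  rewrite sumr_const card_ord -[X in X <= _]mulr_natl mulr_sumr.
  under eq_bigr do rewrite mulr_sumr.
  under eq_bigr do rewrite mulr_sumr.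
  rewrite exchange_big /=; apply: eqle; apply: eq_bigr => m _.
  rewrite (mulr_sumr _ _ _ (Q%:R * a m)) (mulr_sumr _ _ _ (Q%:R * b m)) -big_split /=; apply: eq_bigr => S _.
  ring.
have step2 : forall m, \sum_(S : {set 'I_N}) pB S * sqnorm (G0 x y h l S T0 m)
    <= sqnorm (gradF x y h l m T0) + sigma m ^+ 2 / B%:R.
  move=> m.
  rewrite /G0 (variance _ _ pB (fun S => gradSTheta x y h l S m T0) (gradF x y h l m T0) pB_sum1 (A2 m T0)).
  by rewrite lerD2l; apply: A3.
apply: (le_trans step1).
apply: (@le_trans _ _ (\sum_(m < M.+1) (Q%:R * a m * (sqnorm (gradF x y h l m T0) + sigma m ^+ 2 / B%:R)
        + Q%:R * b m * \sum_(S : {set 'I_N}) pB S * err_sq x h C S T0 m))).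
  apply: ler_sum => m _; rewrite lerD2r; apply: ler_wpM2l; last exact: step2.
  exact: mulr_ge0.
apply: eqle.
rewrite !mulr_sumr -!big_split /=; apply: eq_bigr => m _.
rewrite /a /b; ring.
Qed.
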